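(* Let $\Delta$ be a finite saturated sample set, $\delta$ a $\Delta$-diagram, and $t$ a basic term. If the time warp $f$ strongly extends $D_t(\delta)$, then $f^\star$ strongly extends $D_{t'}(\delta)$.
   Context: Time warps: join-preserving maps $f\colon\omega^+\to\omega^+$, $\omega^+=\omega\cup\{\omega\}$, ordered pointwise; $p(m)=\bigvee\{k\in\omega\mid k<m\}$; $f^\star$ is the largest time warp $h$ with $f\circ h\le p$; $\mathrm{last}(f)=\min\{m\in\omega^+\mid f(m)=f(\omega)\}$. Basic terms are built from variables using $\cdot,{}',1$. Samples (formal expressions): $\alpha::=\kappa\mid t[\alpha]\mid \mathrm{suc}(\alpha)\mid\mathrm{last}(t)$ with $\kappa$ a time variable and $t$ a basic term. The relation $\leadsto$: $t[\alpha]\leadsto\alpha$, $\mathrm{suc}(\alpha)\leadsto\alpha$, $t[\alpha]\leadsto t[\mathrm{last}(t)]$, $(tu)[\alpha]\leadsto t[u[\alpha]]$, $t'[\alpha]\leadsto t[t'[\alpha]]$, $t'[\alpha]\leadsto t[\mathrm{suc}(t'[\alpha])]$; a sample set is saturated if closed under $\leadsto$. $S(n)=n+1$ for $n\in\omega$, $S(\omega)=\omega$. For saturated $\Delta$, a $\Delta$-diagram is $\delta\colon\Delta\to\omega^+$ such that, whenever the samples mentioned belong to $\Delta$: (1) $\delta(\alpha)\le\delta(\beta)\Rightarrow\delta(t[\alpha])\le\delta(t[\beta])$; (2) $\delta(\alpha)=0\Rightarrow\delta(t[\alpha])=0$; (3) $\delta(\mathrm{suc}(\alpha))=S(\delta(\alpha))$;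 (4) for $t[\alpha]\in\Delta$: $\delta(\mathrm{last}(t))\le\delta(\alpha)\iff\delta(t[\mathrm{last}(t)])=\delta(t[\alpha])$; (5) $\delta(\mathrm{last}(t))=\omega\Rightarrow\delta(t[\mathrm{last}(t)])=\omega$; (6) $\delta(1[\alpha])=\delta(\alpha)$; (7) $\delta(\mathrm{last}(1))=\omega$; (8) $\delta((tu)[\alpha])=\delta(t[u[\alpha]])$; (9) $\delta(\mathrm{last}(tu))=\omega\Rightarrow\delta(\mathrm{last}(t))=\delta(\mathrm{last}(u))=\omega$; (10) for $t'[\alpha]\in\Delta$: $0<\delta(\alpha)<\omega\Rightarrow\delta(t[t'[\alpha]])<\delta(\alpha)$; (11) for $t'[\alpha]\in\Delta$: $\delta(t'[\alpha])<\omega\Rightarrow\delta(\alpha)\le\delta(t[\mathrm{suc}(t'[\alpha])])$; (12) $\delta(\mathrm{last}(t'))=\omega\Rightarrow\delta(\mathrm{last}(t))=\omega$. For a basic term $t$, $D_t(\delta)=\{(\delta(\alpha),\delta(t[\alpha]))\mid t[\alpha]\in\Delta\}$. A time warp $f$ extends $D_t(\delta)$ if $f(i)=j$ for all $(i,j)\in D_t(\delta)$, and strongly extends it if moreover $D_t(\delta)\neq\emptyset$ and $\delta(\mathrm{last}(t))=\omega$ together imply $\mathrm{last}(f)=\omega$. *)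

(* Defs.v *)
From Stdlib Require Import List.

Inductive omegap : Type := Fin (n : nat) | Omega.

Definition leo (x y : omegap) : Prop :=
  match x, y with
  | Fin m, Fin n => m <= n
  | _, Omega => True
  | Omega, Fin _ => False
  end.

Definition lto (x y : omegap) : Prop := leo x y /\ x <> y.

Definition is_ub (S : omegap -> Prop) (x : omegap) : Prop :=
  forall y, S y -> leo y x.
Definition is_lub (S : omegap -> Prop) (x : omegap) : Prop :=
  is_ub S x /\ forall z, is_ub S z -> leo x z.

Definition time_warp (f : omegap -> omegap) : Prop :=
  forall (S : omegap -> Prop) (x : omegap),
    is_lub S x -> is_lub (fun y => exists z, S z /\ y = f z) (f x).

(* p(m) = \/ {k in omega | k < m} *)
Definition pred_warp (m : omegap) : omegap :=
  match m with
  | Fin 0 => Fin 0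
  | Fin (S n) => Fin n
  | Omega => Omega
  end.

Definition is_star (f h : omegap -> omegap) : Prop :=
  time_warp h /\ (forall m, leo (f (h m)) (pred_warp m)) /\
  (forall h', time_warp h' -> (forall m, leo (f (h' m)) (pred_warp m)) ->
     forall m, leo (h' m) (h m)).

Definition is_last (f : omegap -> omegap) (m : omegap) : Prop :=
  f m = f Omega /\ forall k, f k = f Omega -> leo m k.

Definition succo (x : omegap) : omegap :=
  match x with Fin n => Fin (S n) | Omega => Omega end.

Inductive term : Type :=
| TVar (x : nat)
| TMul (t u : term)
| TPrime (t : term)
| TOne.

Inductive sample : Type :=
| SVar (k : nat)
| SApp (t : term) (a : sample)
| SSuc (a : sample)
| SLast (t : term).

Inductive leadsto : sample -> sample -> Prop :=
| ls_app t a : leadsto (SApp t a) a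
| ls_suc a : leadsto (SSuc a) a
| ls_last t a : leadsto (SApp t a) (SApp t (SLast t))
| ls_mul t u a : leadsto (SApp (TMul t u) a) (SApp t (SApp u a))
| ls_prime1 t a : leadsto (SApp (TPrime t) a) (SApp t (SApp (TPrime t) a))
| ls_prime2 t a :
    leadsto (SApp (TPrime t) a) (SApp t (SSuc (SApp (TPrime t) a))).

Definition saturated (D : sample -> Prop) : Prop :=
  forall a b, leadsto a b -> D a -> D b.

Definition finite_set (D : sample -> Prop) : Prop :=
  exists l : list sample, forall a, D a <-> In a l.

Definition diagram (D : sample -> Prop) (d : sample -> omegap) : Prop :=
  (* (1) *)
  (forall t a b, D (SApp t a) -> D (SApp t b) -> D a -> D b ->
     leo (d a) (d b) -> leo (d (SApp t a)) (d (SApp t b))) /\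
  (* (2) *)
  (forall t a, D (SApp t a) -> D a -> d a = Fin 0 -> d (SApp t a) = Fin 0) /\
  (* (3) *)
  (forall a, D (SSuc a) -> D a -> d (SSuc a) = succo (d a)) /\
  (* (4) *)
  (forall t a, D (SApp t a) -> D (SLast t) -> D a -> D (SApp t (SLast t)) ->
     (leo (d (SLast t)) (d a) <-> d (SApp t (SLast t)) = d (SApp t a))) /\
  (* (5) *)
  (forall t, D (SLast t) -> D (SApp t (SLast t)) ->
     d (SLast t) = Omega -> d (SApp t (SLast t)) = Omega) /\
  (* (6) *)
  (forall a, D (SApp TOne a) -> D a -> d (SApp TOne a) = d a) /\
  (* (7) *)
  (D (SLast TOne) -> d (SLast TOne) = Omega) /\
  (* (8) *)
  (forall t u a, D (SApp (TMul t u) a) -> D (SApp t (SApp u a)) ->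
     d (SApp (TMul t u) a) = d (SApp t (SApp u a))) /\
  (* (9) *)
  (forall t u, D (SLast (TMul t u)) -> D (SLast t) -> D (SLast u) ->
     d (SLast (TMul t u)) = Omega -> d (SLast t) = Omega /\ d (SLast u) = Omega) /\
  (* (10) *)
  (forall t a, D (SApp (TPrime t) a) -> D a -> D (SApp t (SApp (TPrime t) a)) ->
     lto (Fin 0) (d a) -> lto (d a) Omega ->
     lto (d (SApp t (SApp (TPrime t) a))) (d a)) /\
  (* (11) *)
  (forall t a, D (SApp (TPrime t) a) -> D a ->
     D (SApp t (SSuc (SApp (TPrime t) a))) ->
     lto (d (SApp (TPrime t) a)) Omega ->
     leo (d a) (d (SApp t (SSuc (SApp (TPrime t) a))))) /\
  (* (12) *)
  (forall t, D (SLast (TPrime t)) -> D (SLast t) ->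
     d (SLast (TPrime t)) = Omega -> d (SLast t) = Omega).

Definition Dt (D : sample -> Prop) (d : sample -> omegap) (t : term)
  (i j : omegap) : Prop :=
  exists a, D (SApp t a) /\ i = d a /\ j = d (SApp t a).

Definition extends (D : sample -> Prop) (d : sample -> omegap) (t : term)
  (f : omegap -> omegap) : Prop :=
  forall i j, Dt D d t i j -> f i = j.

Definition strongly_extends (D : sample -> Prop) (d : sample -> omegap)
  (t : term) (f : omegap -> omegap) : Prop :=
  extends D d t f /\
  ((exists i j, Dt D d t i j) -> d (SLast t) = Omega -> is_last f Omega).

(* Main.v *)
Require Import Defs.
From Stdlib Require Import Classical Lia Arith.

Lemma leo_trans x y z : leo x y -> leo y z -> leo x z.
Proof. destruct x, y, z; simpl; intuition lia. Qed.
Lemma leo_antisym x y : leo x y -> leo y x -> x = y.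
Proof. destruct x, y; simpl; intuition; f_equal; lia. Qed.
Lemma leo_refl x : leo x x.
Proof. destruct x; simpl; auto. Qed.
Lemma leo_Omega x : leo x Omega.
Proof. destruct x; exact I. Qed.
Lemma leo0 x : leo (Fin 0) x.
Proof. destruct x; simpl; auto; lia. Qed.
Lemma leo_dich v q : leo v (Fin q) \/ leo (Fin (S q)) v.
Proof. destruct v; simpl; auto; lia. Qed.

Lemma tw0 g : time_warp g -> g (Fin 0) = Fin 0.
Proof.
  intros H. destruct (H (fun _ => False) (Fin 0)) as [_ Hl].
  - split; [intros y []| intros z _; apply leo0].
  - assert (A : leo (g (Fin 0)) (Fin 0)) by (apply Hl; intros y [z [[] _]]).
    destruct (g (Fin 0)) as [[|n]|]; simpl in A; try lia; auto; contradiction.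
Qed.

Lemma twmono g x y : time_warp g -> leo x y -> leo (g x) (g y).
Proof.
  intros H Hxy. destruct (H (fun z => z = x \/ z = y) y) as [Hu _].
  - split. intros z [->| ->]; auto using leo_refl. intros z Hz; apply Hz; auto.
  - apply Hu. exists x; auto.
Qed.

Lemma twOmega g z : time_warp g -> (forall n, leo (g (Fin n)) z) -> leo (g Omega) z.
Proof.
  intros H Hz. destruct (H (fun y => exists n, y = Fin n) Omega) as [_ Hl].
  - split. intros y _; apply leo_Omega.
    intros w Hw. destruct w as [m|]; simpl; auto.
    specialize (Hw (Fin (S m)) (ex_intro _ _ eq_refl)); simpl in Hw; lia.
  - apply Hl. intros y [w [[n ->] ->]]. auto.
Qed.

Lemma twOmega_fin g c : time_warp g -> g Omega = Fin c -> exists k, g (Fin k) = Fin c.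
Proof.
  intros H Hc. apply NNPP; intros Hno.
  destruct c as [|c].
  - apply Hno; exists 0; apply tw0; auto.
  - assert (leo (g Omega) (Fin c)).
    { apply twOmega; auto. intros n.
      assert (A := twmono g (Fin n) Omega H (leo_Omega _)). rewrite Hc in A.
      destruct (g (Fin n)) as [m|] eqn:E; simpl in *; [|contradiction].
      assert (m <> S c) by (intro; subst; apply Hno; eauto). lia. }
    rewrite Hc in H0; simpl in H0; lia.
Qed.

Definition stepf (n : nat) (k : omegap) (m : omegap) : omegap :=
  match m with Fin p => if Nat.leb (S n) p then k else Fin 0 | Omega => k end.

Lemma stepf_hi n k m : leo (Fin (S n)) m -> stepf n k m = k.
Proof. destruct m as [p|]; [|reflexivity]. intros Hm. unfold stepf. destruct (Nat.leb_spec (S n) p); auto; simpl in Hm; lia. Qed.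
Lemma stepf_lo n k m : ~ leo (Fin (S n)) m -> stepf n k m = Fin 0.
Proof. destruct m as [p|]; [|simpl; tauto]. intros Hm. unfold stepf.
  destruct (Nat.leb_spec (S n) p); auto. simpl in Hm; lia. Qed.
Lemma stepf_le n k m : leo (stepf n k m) k.
Proof. destruct m as [p|]; unfold stepf; [destruct (Nat.leb_spec (S n) p)|]; auto using leo_refl, leo0. Qed.

Lemma step_tw n k : time_warp (stepf n k).
Proof.
  intros Sx x [Hub Hl].
  destruct (classic (leo (Fin (S n)) x)) as [Hx|Hx].
  - rewrite (stepf_hi _ _ _ Hx). split.
    + intros y [z [_ ->]]. apply stepf_le.
    + intros z Hz.
      destruct (classic (exists y, Sx y /\ leo (Fin (S n)) y)) as [[y [Sy Hy]]|Hno].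
      * specialize (Hz (stepf n k y) (ex_intro _ y (conj Sy eq_refl))).
        rewrite (stepf_hi _ _ _ Hy) in Hz; auto.
      * exfalso. assert (leo x (Fin n)).
        { apply Hl. intros y Sy. destruct (leo_dich y n); auto.
          exfalso; eauto. }
        assert (B := leo_trans _ _ _ Hx H). simpl in B; lia.
  - rewrite (stepf_lo _ _ _ Hx). split.
    + intros y [z [Sz ->]]. rewrite stepf_lo. apply leo_refl.
      intro C. apply Hx. eapply leo_trans; eauto.
    + intros; apply leo0.
Qed.

Lemma star_max f h k n : time_warp f -> is_star f h -> leo (f k) (Fin n) ->
  leo k (h (Fin (S n))).
Proof.
  intros Hf [Htw [Hle Hmax]] Hk.
  specialize (Hmax (stepf n k) (step_tw n k)).
  rewrite <- (stepf_hi n k (Fin (S n))) by (simpl; lia).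
  apply Hmax.
  intros [p|]; [|apply leo_Omega].
  destruct (classic (leo (Fin (S n)) (Fin p))) as [Hp|Hp].
  - rewrite stepf_hi by auto. simpl in Hp. destruct p as [|p]; [lia|]. simpl.
    eapply leo_trans; [exact Hk|]; simpl; lia.
  - rewrite stepf_lo by auto. rewrite tw0 by auto. apply leo0.
Qed.

Lemma star_le f h n : is_star f h -> leo (f (h (Fin (S n)))) (Fin n).
Proof. intros [_ [H _]]. apply (H (Fin (S n))). Qed.

Theorem lemma3p6 (D : sample -> Prop) (d : sample -> omegap) (t : term)
  (f h : omegap -> omegap) :
  finite_set D -> saturated D -> diagram D d ->
  time_warp f -> strongly_extends D d t f ->
  is_star f h ->
  strongly_extends D d (TPrime t) h.
Proof.
  intros _ HS Hd Hf [Hext Hlastf] Hst.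
  destruct Hd as (H1 & H2 & H3 & H4 & H5 & H6 & H7 & H8 & H9 & H10 & H11 & H12).
  assert (Hh := Hst). destruct Hh as [Hhtw [Hhle _]].
  assert (Hfin : forall b n, D (SApp (TPrime t) b) -> d b = Fin (S n) ->
            h (Fin (S n)) = d (SApp (TPrime t) b)).
  { intros b n Db Hb.
    assert (Db0 : D b) by (apply (HS (SApp (TPrime t) b)); [constructor|auto]).
    assert (D1 : D (SApp t (SApp (TPrime t) b))) by (apply (HS (SApp (TPrime t) b)); [constructor|auto]).
    assert (D2 : D (SApp t (SSuc (SApp (TPrime t) b)))) by (apply (HS (SApp (TPrime t) b)); [constructor|auto]).
    assert (D3 : D (SSuc (SApp (TPrime t) b))) by (apply (HS _ _ (ls_app t _)); auto).
    assert (D4 : D (SApp (TPrime t) b)) by auto.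
    assert (Ef : f (d (SApp (TPrime t) b)) = d (SApp t (SApp (TPrime t) b))).
    { apply Hext. exists (SApp (TPrime t) b); auto. }
    assert (L10 := H10 t b Db Db0 D1).
    rewrite Hb in L10.
    assert (L : lto (d (SApp t (SApp (TPrime t) b))) (Fin (S n))).
    { apply L10; split; simpl; try lia; congruence. }
    assert (Hj : leo (d (SApp (TPrime t) b)) (h (Fin (S n)))).
    { apply (star_max f); auto. rewrite Ef. destruct L as [La Lb].
      destruct (d (SApp t (SApp (TPrime t) b))); simpl in *; try contradiction.
      assert (n0 <> S n) by congruence. lia. }
    destruct (d (SApp (TPrime t) b)) as [q|] eqn:Ej.
    2:{ apply leo_antisym; auto using leo_Omega. }
    apply leo_antisym; auto.
    assert (L11 := H11 t b Db Db0 D2). rewrite Ej, Hb in L11.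
    assert (L11' : leo (Fin (S n)) (d (SApp t (SSuc (SApp (TPrime t) b)))))
      by (apply L11; split; [exact I| discriminate]).
    assert (E3 : d (SSuc (SApp (TPrime t) b)) = Fin (S q)) by (rewrite H3; auto; rewrite Ej; auto).
    assert (Ef2 : f (Fin (S q)) = d (SApp t (SSuc (SApp (TPrime t) b)))).
    { rewrite <- E3. apply Hext. exists (SSuc (SApp (TPrime t) b)); auto. }
    destruct (leo_dich (h (Fin (S n))) q) as [A|A]; auto.
    exfalso. assert (B := twmono f _ _ Hf A).
    assert (C := star_le f h n Hst).
    rewrite Ef2 in B. assert (E := leo_trans _ _ _ L11' (leo_trans _ _ _ B C)).
    simpl in E; lia. }
  assert (Hlast : forall a, D (SApp (TPrime t) a) -> d (SLast (TPrime t)) = Omega ->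
            h Omega = Omega /\ is_last h Omega).
  { intros a Da HL.
    assert (D1 : D (SApp t (SApp (TPrime t) a))) by (apply (HS (SApp (TPrime t) a)); [constructor|auto]).
    assert (D2 : D (SApp t (SLast t))) by (apply (HS _ _ (ls_last t (SApp (TPrime t) a))); eauto).
    assert (D3 : D (SLast t)) by (apply (HS _ _ (ls_app t _)); eauto).
    assert (D4 : D (SApp (TPrime t) (SLast (TPrime t)))) by (apply (HS _ _ (ls_last _ a)); eauto).
    assert (D5 : D (SLast (TPrime t))) by (apply (HS _ _ (ls_app (TPrime t) _)); eauto).
    assert (Lt : d (SLast t) = Omega) by auto.
    assert (Lf : is_last f Omega).
    { apply Hlastf; auto. exists (d (SApp (TPrime t) a)), (d (SApp t (SApp (TPrime t) a))).
      exists (SApp (TPrime t) a); auto. }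
    destruct Lf as [_ Lf].
    assert (FO : f Omega = Omega).
    { destruct (f Omega) as [c|] eqn:E; auto.
      destruct (twOmega_fin f c Hf E) as [k Hk].
      apply Lf in Hk. contradiction. }
    assert (Ffin : forall k, exists c, f (Fin k) = Fin c).
    { intros k. destruct (f (Fin k)) as [c|] eqn:E; eauto.
      rewrite <- FO in E. apply Lf in E; contradiction. }
    assert (Hnfin : forall n, h (Fin n) <> Omega).
    { intros [|n] E. rewrite tw0 in E; auto; discriminate.
      assert (C := star_le f h n Hst). rewrite E, FO in C. contradiction. }
    assert (HO : h Omega = Omega).
    { destruct (h Omega) as [q|] eqn:E; auto. exfalso.
      destruct (Ffin (S q)) as [c Hc].
      assert (A := star_max f h (Fin (S q)) c Hf Hst (eq_ind_r (fun v => leo v (Fin c)) (leo_refl _) Hc)).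
      assert (B := twmono h _ _ Hhtw (leo_Omega (Fin (S c)))).
      rewrite E in B. assert (C := leo_trans _ _ _ A B). simpl in C; lia. }
    split; auto. split; auto. intros [k|] Ek; simpl; auto. rewrite HO in Ek. apply (Hnfin k Ek). }
  split.
  - intros i j [a [Da [-> ->]]].
    assert (Da0 : D a) by (apply (HS _ _ (ls_app (TPrime t) _)); eauto).
    destruct (d a) as [[|n]|] eqn:E.
    + rewrite tw0 by auto. symmetry; apply H2; auto.
    + apply Hfin; auto.
    +
      assert (D4 : D (SApp (TPrime t) (SLast (TPrime t)))) by (apply (HS _ _ (ls_last _ a)); eauto).
      assert (D5 : D (SLast (TPrime t))) by (apply (HS _ _ (ls_app (TPrime t) _)); eauto).
      assert (E4 : d (SApp (TPrime t) (SLast (TPrime t))) = d (SApp (TPrime t) a)).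
      { apply (H4 (TPrime t) a); auto. rewrite E; apply leo_Omega. }
      assert (Hup : forall q, d (SApp (TPrime t) a) = Fin q -> leo (h Omega) (Fin q)).
      { intros q Eq.
        assert (D2 : D (SApp t (SSuc (SApp (TPrime t) a)))) by (apply (HS (SApp (TPrime t) a)); [constructor|auto]).
        assert (D3 : D (SSuc (SApp (TPrime t) a))) by (apply (HS _ _ (ls_app t _)); auto).
        assert (L11 := H11 t a Da Da0 D2). rewrite Eq, E in L11.
        assert (L11' : leo Omega (d (SApp t (SSuc (SApp (TPrime t) a)))))
          by (apply L11; split; [exact I| discriminate]).
        assert (E3 : d (SSuc (SApp (TPrime t) a)) = Fin (S q)) by (rewrite H3; auto; rewrite Eq; auto).
        assert (Ef2 : f (Fin (S q)) = d (SApp t (SSuc (SApp (TPrime t) a)))).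
        { rewrite <- E3. apply Hext. exists (SSuc (SApp (TPrime t) a)); auto. }
        apply twOmega; auto. intros [|n]. rewrite tw0; auto using leo0.
        destruct (leo_dich (h (Fin (S n))) q) as [A|A]; auto.
        exfalso. assert (B := twmono f _ _ Hf A).
        assert (C := star_le f h n Hst).
        rewrite Ef2 in B. assert (X := leo_trans _ _ _ L11' (leo_trans _ _ _ B C)).
        simpl in X; contradiction. }
      destruct (d (SLast (TPrime t))) as [[|m]|] eqn:EL.
      * assert (Z : d (SApp (TPrime t) (SLast (TPrime t))) = Fin 0) by auto.
        rewrite Z in E4. rewrite <- E4 in Hup |- *.
        apply leo_antisym; auto using leo0.
      * assert (Z := Hfin _ m D4 EL). rewrite E4 in Z.
        assert (M := twmono h _ _ Hhtw (leo_Omega (Fin (S m)))).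
        destruct (d (SApp (TPrime t) a)) as [q|] eqn:Eq.
        -- apply leo_antisym; auto. rewrite <- Z; auto.
        -- rewrite Z in M. destruct (h Omega); simpl in M; auto; contradiction.
      * destruct (Hlast a Da eq_refl) as [HO _]. rewrite HO, <- E4. symmetry; apply H5; auto.
  - intros [i [j [a [Da _]]]] HL. eapply Hlast; eauto.
Qed.
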